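(* Let $G$ be a finite simple connected graph with $n\ge 2$ vertices and maximum degree $\Delta$. Then (a) $c_{\infty}(G)\ge \dfrac{\iota_e n}{\Delta^2-\Delta+\iota_e(\Delta+1)}\ge \dfrac{\iota_e n}{2\Delta^2}$; (b) $c_{\infty}(G)\ge \dfrac{\iota_v n}{3\Delta+\iota_v(\Delta+1)}$; (c) $c_{\infty}(G)\ge \dfrac{\iota_v n}{4\Delta}$, where $\iota_e=\iota_e(G)$ and $\iota_v=\iota_v(G)$.
   Context: Cops and Robber with an infinitely fast robber: the game is played on a graph $G$. A set of cops first choose initial vertices (several cops may share a vertex); then the robber, knowing their positions, chooses a vertex. Then the players move in alternating rounds, cops first. In the cops' turn each cop either stays or moves to an adjacent vertex; in the robber's turn she either stays or moves along any path of $G$ starting at her current vertex that contains no vertex currently occupied by a cop. The cops win if at some point a cop moves to the vertex occupied by the robber. $c_{\infty}(G)$ is the minimum number of cops for which the cops have a strategy that guarantees a win. For $S\subseteq V(G)$, $\partial S$ is the set of edges with exactly one endpoint in $S$, and $N(S)$ is the set of vertices having a neighbour in $S$. The edge- and vertex-isoperimetric numbers are $\iota_e(G)=\min_{0<|S|\le n/2}|\partial S|/|S|$ and $\iota_v(G)=\min_{0<|S|\le n/2}|N(S)\setminus S|/|S|$. *)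

(* Defs.v *)
From HB Require Import structures.
From mathcomp Require Import all_boot all_order all_algebra.
From Stdlib Require Import ClassicalEpsilon.
Set Implicit Arguments. Unset Strict Implicit. Unset Printing Implicit Defensive.
Import Order.TTheory GRing.Theory Num.Theory.

(* A finite simple graph: vertex type T : finType, adjacency e : rel T,
   assumed symmetric and irreflexive in the theorem. *)

Section Graph.
Variables (T : finType) (e : rel T).

Definition maxdeg : nat := \max_(v : T) #|[set u | e v u]|.

(* |∂S| : edges with exactly one endpoint in S; each such edge {x,y} is
   counted once as the ordered pair (x,y) with x \in S, y \notin S. *)
Definition edge_boundary (S : {set T}) : nat :=
  #|[set p : T * T | [&& p.1 \in S, p.2 \notin S & e p.1 p.2]]|.

Definition vertex_boundary (S : {set T}) : {set T} :=
  [set y | (y \notin S) && [exists x in S, e x y]].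

Definition iso_admissible (S : {set T}) : bool :=
  (0 < #|S|) && (2 * #|S| <= #|T|).

(* minimum of ratio over admissible sets (0 if there is no admissible set) *)
Definition min_ratio (R : realFieldType) (ratio : {set T} -> R) : R :=
  match [pick A | iso_admissible A &&
           [forall B, iso_admissible B ==> (ratio A <= ratio B)%R]] with
  | Some A => ratio A
  | None => 0%R
  end.

Definition iota_e (R : realFieldType) : R :=
  min_ratio (fun S => ((edge_boundary S)%:R / (#|S|)%:R)%R).

Definition iota_v (R : realFieldType) : R :=
  min_ratio (fun S => ((#|vertex_boundary S|)%:R / (#|S|)%:R)%R).

Definition cops_move k (c c' : {ffun 'I_k -> T}) : Prop :=
  forall i, c' i = c i \/ e (c i) (c' i).

Definition robber_move k (c : {ffun 'I_k -> T}) (r r' : T) : Prop :=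
  r \notin codom c /\
  connect [rel x y | e x y && (y \notin codom c)] r r'.

(* cwin c r : it is the cops' turn, cops at c, robber at r, and the cops
   can force a capture in finitely many rounds (least fixed point). *)
Inductive cwin k : {ffun 'I_k -> T} -> T -> Prop :=
| cwin_step (c c' : {ffun 'I_k -> T}) (r : T) :
    cops_move c c' ->
    ((exists i, c' i = r) \/
     (forall r', robber_move c' r r' -> cwin c' r')) ->
    cwin c r.

Definition cops_win (k : nat) : Prop :=
  exists c0 : {ffun 'I_k -> T}, forall r0 : T, cwin c0 r0.

Lemma cops_win_card : cops_win #|T|.
Proof.
exists [ffun i => enum_val i] => r.
apply: (@cwin_step _ [ffun i => enum_val i] [ffun i => enum_val i] r).
  by move=> i; left.
by left; exists (enum_rank r); rewrite ffunE enum_rankK.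
Qed.

Definition cops_winb (k : nat) : bool :=
  if excluded_middle_informative (cops_win k) then true else false.

Lemma cops_winb_ex : exists k, cops_winb k.
Proof.
exists #|T|; rewrite /cops_winb.
by case: excluded_middle_informative => // H; exfalso; apply: H; exact: cops_win_card.
Qed.

Definition c_infty : nat := ex_minn cops_winb_ex.

End Graph.

(* Main.v *)
Require Import Defs.
From HB Require Import structures.
From mathcomp Require Import all_boot all_order all_algebra.
From Stdlib Require Import Classical ClassicalEpsilon.
From mathcomp Require Import zify ring lra.
Import Order.TTheory GRing.Theory Num.Theory.
Set Implicit Arguments. Unset Strict Implicit.

Section S.
Variables (T : finType) (e : rel T).

Lemma cwin_ind' k (P : {ffun 'I_k -> T} -> T -> Prop) :
  (forall c c' r, cops_move e c c' ->
     ((exists i, c' i = r) \/ (forall r', robber_move e c' r r' -> P c' r')) -> P c r) ->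
  forall c r, cwin e c r -> P c r.
Proof.
move=> H; fix IH 3 => c r [c1 c' r1 hm hor].
apply: (H _ c') => //; case: hor => [h|h]; [by left|right].
by move=> r' hr'; apply: IH; apply: h.
Qed.

Definition nbhd k (c : {ffun 'I_k -> T}) : {set T} :=
  [set y | [exists i, (c i == y) || e (c i) y]].
Definition restr (L : {set T}) := [rel a b | e a b && (b \in L)].
Definition bigc (Y L : {set T}) : Prop :=
  [/\ L \subset ~: Y, #|T| < 2 * #|L| &
      forall x y, x \in L -> y \in L -> connect (restr L) x y].

Lemma meet_big (L L' : {set T}) : #|T| < 2 * #|L| -> #|T| < 2 * #|L'| ->
  exists v, (v \in L) && (v \in L').
Proof.
move=> h1 h2; case: (set_0Vmem (L :&: L')) => [h|[v]]; last first.
  by rewrite inE => hv; exists v.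
have := cardsUI L L'; rewrite h cards0 addn0 => hU.
have := max_card (L :|: L'); rewrite hU => hm; exfalso; lia.
Qed.

Lemma robber k (H : forall c : {ffun 'I_k -> T}, exists L, bigc (@nbhd k c) L) c r :
  cwin e c r -> forall L, bigc (@nbhd k c) L -> r \in L -> False.
Proof.
move=> hw; elim/cwin_ind': c r / hw => c c' r hm hor L [hLY hLn hLc] hr.
have inN : forall i, c' i \in nbhd c.
  move=> i; rewrite inE; apply/existsP; exists i.
  by case: (hm i) => h; rewrite h ?eqxx ?orbT.
have notN : forall x, x \in L -> x \notin nbhd c.
  by move=> x hx; have := subsetP hLY x hx; rewrite inE.
case: hor => [[i hi]|hall].
  by have := notN r hr; rewrite -hi inN.
have [L' [hLY' hLn' hLc']] := H c'.
have [v /andP [hv hv']] := meet_big hLn hLn'.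
apply: (hall v _ L') => //; split.
  apply/negP => /codomP [i hi]; by have := notN r hr; rewrite hi inN.
apply: connect_sub (hLc r v hr hv) => x y /= /andP [exy hy].
apply: connect1; rewrite /= exy /=; apply/negP => /codomP [i hi].
by have := notN y hy; rewrite hi inN.
Qed.

Lemma not_good k : cops_win e k -> exists c : {ffun 'I_k -> T}, forall L, ~ bigc (@nbhd k c) L.
Proof.
move=> [c0 hc0]; apply: NNPP => hn.
have H : forall c : {ffun 'I_k -> T}, exists L, bigc (@nbhd k c) L.
  move=> c; apply: NNPP => h; apply: hn; exists c => L hL; apply: h; by exists L.
have [L hL] := H c0.
have : 0 < #|L| by case: hL => _ hn' _; lia.
case/card_gt0P => r hr.
exact: (robber H (hc0 r) hL hr).
Qed.

Hypothesis esym : symmetric e.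

Definition closedY (Y W : {set T}) : bool :=
  (W \subset ~: Y) && [forall x in W, forall z, e x z ==> (z \in Y) || (z \in W)].

Lemma closedP (Y W : {set T}) : reflect (W \subset ~: Y /\ forall x z, x \in W -> e x z -> (z \in Y) || (z \in W))
  (closedY Y W).
Proof.
apply: (iffP andP) => [[h1 /forall_inP h2]|[h1 h2]]; split => //.
  by move=> x z hx hz; have /forallP/(_ z)/implyP := h2 x hx; apply.
by apply/forall_inP => x hx; apply/forallP => z; apply/implyP; apply: h2.
Qed.

Lemma closedC (Y : {set T}) : closedY Y (~: Y).
Proof. by apply/closedP; split => // x z _ _; rewrite inE orbN. Qed.

Lemma closed0 (Y : {set T}) : closedY Y set0.
Proof. by apply/closedP; split; [exact: sub0set| move=> x z; rewrite inE]. Qed.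

Lemma closedU (Y A B : {set T}) : closedY Y A -> closedY Y B -> closedY Y (A :|: B).
Proof.
move=> /closedP [hA1 hA2] /closedP [hB1 hB2]; apply/closedP; split.
  by rewrite subUset hA1 hB1.
move=> x z; rewrite in_setU => /orP [hx|hx] hxz; rewrite in_setU.
  by case/orP: (hA2 x z hx hxz) => h; rewrite h ?orbT.
by case/orP: (hB2 x z hx hxz) => h; rewrite h ?orbT.
Qed.

Lemma closedD (Y W P : {set T}) : closedY Y W -> closedY Y P -> closedY Y (W :\: P).
Proof.
move=> /closedP [hW1 hW2] /closedP [hP1 hP2]; apply/closedP; split.
  by apply: subset_trans hW1; apply: subsetDl.
move=> x z; rewrite inE => /andP [hxP hxW] hxz.
case/orP: (hW2 x z hxW hxz) => [->//|hzW].
rewrite inE hzW andbT; apply/orP; right; apply/negP => hzP.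
have := hP2 z x hzP; rewrite esym hxz => /(_ isT) /orP [hxY|]; last by rewrite (negbTE hxP).
by have := subsetP hW1 x hxW; rewrite inE hxY.
Qed.

Lemma small_piece (Y W : {set T}) : (forall L, ~ bigc Y L) -> closedY Y W -> W != set0 ->
  exists P : {set T}, [/\ P \subset W, P != set0, closedY Y P & 2 * #|P| <= #|T|].
Proof.
move=> hnb hW hW0.
pose Q (P : {set T}) := [&& P \subset W, P != set0 & closedY Y P].
have QW : Q W by rewrite /Q subxx hW0 hW.
case: (arg_minnP (fun P : {set T} => #|P|) QW) => P /and3P [hPW hP0 hPc] hmin.
exists P; split => //; rewrite leqNgt; apply/negP => hbig.
apply: (hnb P); split => //; first by case/andP: hPc.
move=> x y hx hy.
pose R := [set z in P | connect (restr P) x z].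
have hRP : R \subset P by apply/subsetP => z; rewrite inE => /andP [].
have hxR : x \in R by rewrite inE hx connect0.
have hRc : closedY Y R.
  apply/closedP; split; first by apply: subset_trans hRP _; case/andP: hPc.
  move=> a b; rewrite inE => /andP [ha hxa] hab.
  case/closedP: hPc => _ /(_ a b ha hab) /orP [->//|hb].
  rewrite inE hb /=; apply/orP; right; apply: connect_trans hxa _.
  by apply: connect1; rewrite /= hab hb.
have QR : Q R.
  rewrite /Q (subset_trans hRP hPW) hRc andbT; apply/set0Pn; by exists x.
have := hmin R QR => hle.
have hRe : R = P by apply/eqP; rewrite eqEcard hRP hle.
have : y \in R by rewrite hRe.
by rewrite inE => /andP [_].
Qed.

Lemma card_disjU (U : finType) (A B : {set U}) : A :&: B = set0 -> #|A :|: B| = #|A| + #|B|.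
Proof. by move=> h; rewrite cardsU h cards0 subn0. Qed.

Lemma max_closed (Y : {set T}) : (forall L, ~ bigc Y L) ->
  exists S : {set T}, [/\ closedY Y S, 2 * #|S| <= #|T|, #|~:Y| <= 3 * #|S| &
     (S = ~:Y \/ #|T| < 4 * #|S|)].
Proof.
move=> hnb.
pose Q (S : {set T}) := closedY Y S && (2 * #|S| <= #|T|).
have Q0 : Q set0 by rewrite /Q closed0 cards0.
case: (arg_maxnP (fun S : {set T} => #|S|) Q0) => S /andP [hSc hSn] hmax.
exists S.
suff [h1 h2] : (#|~: Y| <= 3 * #|S|) /\ (S = ~: Y \/ #|T| < 4 * #|S|) by split.
have hSY : S \subset ~: Y by case/andP: hSc.
have cY : #|~: Y| = #|S| + #|~: Y :\: S|.
  by rewrite -(cardsID S (~: Y)) (setIidPr hSY).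
case: (boolP (~: Y :\: S == set0)) => hW0.
  have hSe : S = ~: Y.
    apply/eqP; rewrite eqEsubset hSY /=; apply/subsetP => x hx.
    apply: contraT => hxS; move/eqP: hW0 => /setP /(_ x).
    by rewrite !inE hxS /=; rewrite inE in hx; rewrite hx.
  by split; [rewrite hSe; lia| left].
have hWc : closedY Y (~: Y :\: S) by apply: closedD => //; exact: closedC.
have [P [hPW hP0 hPc hPn]] := small_piece hnb hWc hW0.
have hP1 : 0 < #|P| by rewrite card_gt0.
have hPS : #|P| <= #|S| by apply: hmax; rewrite /Q hPc hPn.
have hdis : S :&: P = set0.
  apply/setP => x; rewrite !inE; apply/negP => /andP [hxS hxP].
  by have := subsetP hPW x hxP; rewrite !inE hxS.
have hSP : #|T| < 2 * (#|S| + #|P|).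
  rewrite ltnNge; apply/negP => hle.
  have : #|S :|: P| <= #|S| by apply: hmax; rewrite /Q closedU // card_disjU.
  by rewrite card_disjU //; lia.
have cW : #|~: Y :\: S| = #|P| + #|(~: Y :\: S) :\: P|.
  by rewrite -(cardsID P (~: Y :\: S)) (setIidPr hPW).
have hRc : closedY Y ((~: Y :\: S) :\: P) by apply: closedD.
have hM : #|~: Y| <= #|T| by apply: max_card.
split; last by right; lia.
case: (leqP (2 * #|(~: Y :\: S) :\: P|) #|T|) => hR.
  have : #|(~: Y :\: S) :\: P| <= #|S| by apply: hmax; rewrite /Q hRc hR.
  lia.
lia.
Qed.

Definition deg v := #|[set u | e v u]|.
Lemma deg_le v : deg v <= maxdeg e.
Proof. by rewrite /maxdeg /deg; apply: (@leq_bigmax _ (fun v => #|[set u | e v u]|)). Qed.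

Lemma card_bigcup_le (U I : finType) (P : pred I) (F : I -> {set U}) :
  #|\bigcup_(i | P i) F i| <= \sum_(i | P i) #|F i|.
Proof.
elim/big_rec2: _ => [|i s A _ h]; first by rewrite cards0.
apply: leq_trans (leq_card_setU _ _).1 _; by rewrite leq_add2l.
Qed.

Lemma sum_le_const (I : finType) (P : pred I) (F : I -> nat) m :
  (forall i, P i -> F i <= m) -> \sum_(i | P i) F i <= #|P| * m.
Proof.
move=> h; apply: (@leq_trans (\sum_(i | P i) m)); first exact: leq_sum.
by rewrite sum_nat_const.
Qed.

Lemma sum_le_ord n (F : 'I_n -> nat) m :
  (forall i, F i <= m) -> \sum_(i < n) F i <= n * m.
Proof.
move=> h; apply: (@leq_trans (\sum_(i < n) m)); first exact: leq_sum.
by rewrite sum_nat_const card_ord.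
Qed.

Lemma eb_split (Y W P : {set T}) : closedY Y W -> closedY Y P -> P \subset W ->
  edge_boundary e P + edge_boundary e (W :\: P) <= edge_boundary e W.
Proof.
move=> hW hP hPW; have hWP := closedD hW hP.
have hWY : W \subset ~: Y by case/andP: hW.
rewrite /edge_boundary -card_disjU; last first.
  apply/setP => [[x y]]; rewrite in_setI in_set0 !in_set /=; apply/negP => /andP [/and3P [hx _ _] /and3P [hxx _ _]].
  by move: hxx; rewrite hx.
apply: subset_leq_card; apply/subsetP => [[x y]]; rewrite in_setU !in_set /=.
case/orP => [/and3P [hx hy hxy] | /and3P [hxWP hy hxy]].
  have hxW := subsetP hPW x hx.
  case/closedP: hP => _ /(_ x y hx hxy); rewrite (negbTE hy) orbF => hyY.
  rewrite hxW hxy andbT /=; apply/negP => hyW.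
  by have := subsetP hWY y hyW; rewrite inE hyY.
case/andP: (hxWP) => hxP hxW.
have hx' : x \in W :\: P by rewrite in_setD hxP hxW.
have hy' : y \notin W :\: P by rewrite in_setD.
case/closedP: hWP => _ /(_ x y hx' hxy); rewrite (negbTE hy') orbF => hyY.
rewrite hxW hxy andbT /=; apply/negP => hyW.
by have := subsetP hWY y hyW; rewrite inE hyY.
Qed.

Lemma eb_single v : edge_boundary e [set v] <= maxdeg e.
Proof.
apply: leq_trans (deg_le v); rewrite /edge_boundary /deg.
have sub : [set p : T * T | [&& p.1 \in [set v], p.2 \notin [set v] & e p.1 p.2]] \subset
   [set (v, u) | u in [set u | e v u]].
  apply/subsetP => [[x y]]; rewrite !inE /= => /and3P [/eqP -> _ hxy].
  by apply/imsetP; exists y; rewrite ?inE.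
by apply: leq_trans (subset_leq_card sub) _; apply: leq_imset_card.
Qed.

Lemma vb_single v : #|vertex_boundary e [set v]| <= maxdeg e.
Proof.
apply: leq_trans (deg_le v); apply: subset_leq_card; apply/subsetP => y.
by rewrite !inE => /andP [_ /exists_inP [x]]; rewrite inE => /eqP ->.
Qed.

Lemma vb_compl S : #|vertex_boundary e S| <= #|~: S|.
Proof. by apply: subset_leq_card; apply/subsetP => y; rewrite !inE => /andP []. Qed.

Lemma half_set : (2 <= #|T|) -> exists S : {set T}, [/\ 0 < #|S|, 2 * #|S| <= #|T| & #|T| <= 3 * #|S|].
Proof.
move=> h2.
pose Q (S : {set T}) := 2 * #|S| <= #|T|.
have Q0 : Q set0 by rewrite /Q cards0.
case: (arg_maxnP (fun S : {set T} => #|S|) Q0) => S hS hmax.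
have : 0 < #|~: S| by have := cardsC S; move: hS; rewrite /Q; lia.
case/card_gt0P => x; rewrite inE => hx.
have := hmax (x |: S); rewrite /Q cardsU1 hx /= => hm.
have h1 : #|T| < 2 * (1 + #|S|) by rewrite ltnNge; apply/negP => h; have := hm h; lia.
exists S; split => //; lia.
Qed.

Lemma maxdeg_pos : (2 <= #|T|) -> (forall x y, connect e x y) -> 0 < maxdeg e.
Proof.
move=> h2 hc.
have : 0 < #|T| by lia.
case/card_gt0P => x _.
have : 0 < #|[set~ x]| by rewrite cardsC1; lia.
case/card_gt0P => y; rewrite !inE => hyx.
case/connectP: (hc x y) => [[|z p]] /= hp hl.
  by rewrite hl eqxx in hyx.
case/andP: hp => hxz _.
apply: leq_trans (deg_le x); rewrite /deg card_gt0; apply/set0Pn; exists z; by rewrite inE.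
Qed.

Variable k : nat.
Variable c : {ffun 'I_k -> T}.
Let Y := nbhd c.
Let D := maxdeg e.

Lemma card_nbhd : #|Y| <= k * D.+1.
Proof.
have sub : Y \subset \bigcup_(i | true) (c i |: [set u | e (c i) u]).
  apply/subsetP => y; rewrite inE => /existsP [i hi]; apply/bigcupP; exists i => //.
  by case/orP: hi => [/eqP ->|h]; rewrite !inE ?eqxx // h orbT.
apply: leq_trans (subset_leq_card sub) _; apply: leq_trans (card_bigcup_le _ _) _.
apply: sum_le_ord => i; rewrite cardsU1; have := deg_le (c i); rewrite /deg; case: (_ \notin _) => /=; lia.
Qed.

Lemma closed_vb S : closedY Y S -> #|vertex_boundary e S| <= k * D.
Proof.
case/closedP => hSY hS.
have sub : vertex_boundary e S \subset \bigcup_(i | true) [set u | e (c i) u].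
  apply/subsetP => y; rewrite inE => /andP [hyS /exists_inP [x hx hxy]].
  have := hS x y hx hxy; rewrite (negbTE hyS) orbF inE => /existsP [i hi].
  apply/bigcupP; exists i => //; rewrite inE.
  case/orP: hi => // /eqP hci; exfalso.
  have : x \in Y by rewrite inE; apply/existsP; exists i; rewrite hci esym hxy orbT.
  by have := subsetP hSY x hx; rewrite inE => /negbTE ->.
apply: leq_trans (subset_leq_card sub) _; apply: leq_trans (card_bigcup_le _ _) _.
by apply: sum_le_ord => i; apply: deg_le.
Qed.

Lemma eb_compl : edge_boundary e (~: Y) <= k * (D * D.-1).
Proof.
pose G (i : 'I_k) := \bigcup_(y in [set u | e (c i) u]) [set (x, y) | x in [set u | e y u] :\ c i].
have sub : [set p : T * T | [&& p.1 \in ~: Y, p.2 \notin ~: Y & e p.1 p.2]] \subset \bigcup_(i | true) G i.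
  apply/subsetP => [[x y]]; rewrite !inE /= => /and3P [hxY /negPn /existsP [i hi] hxy].
  have hx : forall j, c j != x.
    move=> j; apply/negP => /eqP hj; move/negP: hxY; apply.
    by apply/existsP; exists j; rewrite hj eqxx.
  apply/bigcupP; exists i => //; apply/bigcupP; exists y.
    rewrite inE; case/orP: hi => // /eqP hci; exfalso; move/negP: hxY; apply.
    by apply/existsP; exists i; rewrite hci esym hxy orbT.
  apply/imsetP; exists x => //; by rewrite !inE esym hxy andbT eq_sym hx.
rewrite /edge_boundary; apply: leq_trans (subset_leq_card sub) _; apply: leq_trans (card_bigcup_le _ _) _.
apply: sum_le_ord => i.
apply: leq_trans (card_bigcup_le _ _) _.
have : \sum_(y in [set u | e (c i) u]) #|[set (x, y) | x in [set u | e y u] :\ c i]|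
   <= #|[set u | e (c i) u]| * D.-1.
  apply: sum_le_const => y hy; apply: leq_trans (leq_imset_card _ _) _.
  have := cardsD1 (c i) [set u | e y u]; rewrite inE esym; rewrite inE in hy; rewrite hy.
  have := deg_le y; rewrite /deg; lia.
move=> h; apply: leq_trans h _; rewrite leq_mul2r; apply/orP; right; exact: deg_le.
Qed.

End S.

Section RR.
Variables (R : realFieldType) (T : finType) (e : rel T).
Hypothesis esym : symmetric e.
Local Open Scope ring_scope.

Lemma min_ratio_le (f : {set T} -> R) (B : {set T}) :
  iso_admissible B -> min_ratio f <= f B.
Proof.
move=> hB; rewrite /min_ratio; case: pickP => [A /andP [_ /forallP h]|hn].
  by have := h B; rewrite hB.
exfalso.
have ord_tot : total (fun x y : R => x <= y) by move=> x y; exact: le_total.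
have ord_tr : transitive (fun x y : R => x <= y) by move=> a b d; exact: le_trans.
case: (@extremumP _ _ (fun x y : R => x <= y) B (@iso_admissible T) f (@lexx _ _) ord_tr ord_tot hB) => A hA hmin.
have := hn A; rewrite hA /=; move/negP; apply; apply/forallP => C; apply/implyP; exact: hmin.
Qed.

Lemma min_ratio_ge0 (f : {set T} -> R) : (forall S, 0 <= f S) -> 0 <= min_ratio f.
Proof. by move=> h; rewrite /min_ratio; case: pickP. Qed.

Lemma ratio_ge0 (a b : nat) : 0 <= (a%:R / b%:R : R).
Proof. by apply: divr_ge0; apply: ler0n. Qed.

Lemma ratio_mul (x : R) (a b : nat) : (0 < b)%N -> x <= a%:R / b%:R -> x * b%:R <= a%:R.
Proof. by move=> hb; rewrite ler_pdivlMr // ltr0n. Qed.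

Lemma edge_closed (Y : {set T}) : (forall L, ~ bigc e Y L) ->
  forall W, closedY e Y W -> iota_e e R * (#|W|%:R) <= (edge_boundary e W)%:R.
Proof.
move=> hnb W; elim: {W}_.+1 {-2}W (ltnSn #|W|) => // m IH W hWm hW.
case: (boolP (W == set0)) => [/eqP ->|hW0]; first by rewrite cards0 mulr0 ler0n.
have [P [hPW hP0 hPc hPn]] := small_piece hnb hW hW0.
have hP1 : (0 < #|P|)%N by rewrite card_gt0.
have hieP : iota_e e R * #|P|%:R <= (edge_boundary e P)%:R.
  apply: ratio_mul => //; apply: min_ratio_le; by rewrite /iso_admissible hP1.
have hWPc := closedD esym hW hPc.
have cW : #|W| = (#|P| + #|W :\: P|)%N by rewrite -(cardsID P W) (setIidPr hPW).
have hlt : (#|W :\: P| < m)%N by move: hWm; rewrite cW; lia.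
have := IH _ hlt hWPc => hIH.
have hsplit := eb_split esym hW hPc hPW.
rewrite cW natrD mulrDr; apply: le_trans (lerD hieP hIH) _.
by rewrite -natrD ler_nat.
Qed.
End RR.

Lemma div_le (R : realFieldType) (x y z : R) : (0 <= y -> 0 <= z -> x <= z * y -> x / y <= z)%R.
Proof.
move=> hy hz h; case: (eqVneq y 0%R) => [->|hy0]; first by rewrite invr0 mulr0.
by rewrite ler_pdivrMr // lt_def hy0 hy.
Qed.

Unset Implicit Arguments.
Local Open Scope ring_scope.

Theorem mainTheorem3 (R : realFieldType) (T : finType) (e : rel T) :
  symmetric e -> irreflexive e -> (forall x y, connect e x y) ->
  (2 <= #|T|)%N ->
  let n : R := (#|T|)%:R in
  let D : R := (maxdeg e)%:R in
  let ie : R := iota_e e R in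
  let iv : R := iota_v e R in
  let c : R := (c_infty e)%:R in
  [/\ ie * n / (D ^+ 2 - D + ie * (D + 1)) <= c
      /\ ie * n / (2 * D ^+ 2) <= ie * n / (D ^+ 2 - D + ie * (D + 1)),
      iv * n / (3 * D + iv * (D + 1)) <= c
    & iv * n / (4 * D) <= c].
Proof.
move=> esym eirr hconn h2 n D ie iv c.
have hk : cops_win e (c_infty e).
  rewrite /c_infty; case: ex_minnP => m hm _; move: hm; rewrite /cops_winb.
  by case: excluded_middle_informative.
have [cc hcc] := not_good hk.
have hY := card_nbhd e cc.
have hE := eb_compl esym cc.
have hEc := edge_closed R esym hcc (closedC e (nbhd e cc)).
have [S [hSc hSn hS3 hS4]] := max_closed esym hcc.
have hvb := closed_vb esym hSc.
have hD1 := maxdeg_pos h2 hconn.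
have hcard := cardsC (nbhd e cc).
have ie0 : 0 <= ie by apply: min_ratio_ge0 => S'; exact: ratio_ge0.
have iv0 : 0 <= iv by apply: min_ratio_ge0 => S'; exact: ratio_ge0.
have [v _] : exists v : T, true.
  have : (0 < #|T|)%N by lia.
  by case/card_gt0P => v _; exists v.
have adm1 : iso_admissible [set v] by rewrite /iso_admissible cards1.
have ieD : ie <= D.
  apply: le_trans (min_ratio_le _ adm1) _; rewrite cards1 divr1 ler_nat; exact: eb_single.
have ivD : iv <= D.
  apply: le_trans (min_ratio_le _ adm1) _; rewrite cards1 divr1 ler_nat; exact: vb_single.
have iv2 : iv <= 2.
  have [S0 [h0 h1 h3]] := half_set h2.
  have adm : iso_admissible S0 by rewrite /iso_admissible h0.
  have hh0 : iv <= (#|vertex_boundary e S0|)%:R / (#|S0|)%:R := min_ratio_le _ adm.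
  have := ratio_mul h0 hh0 => hh.
  have h4 : (#|vertex_boundary e S0| <= 2 * #|S0|)%N.
    apply: leq_trans (vb_compl e S0) _; have := cardsC S0; lia.
  have : iv * #|S0|%:R <= 2 * #|S0|%:R.
    apply: le_trans hh _; rewrite -(natrM R 2) ler_nat //.
  by rewrite ler_pM2r // ltr0n.
have ivS : iv * #|S|%:R <= (c_infty e)%:R * D.
  case: (posnP #|S|) => hS0; first by rewrite hS0 mulr0 mulr_ge0 ?ler0n.
  have adm : iso_admissible S by rewrite /iso_admissible hS0.
  have hh0 : iv <= (#|vertex_boundary e S|)%:R / (#|S|)%:R := min_ratio_le _ adm.
  apply: le_trans (ratio_mul hS0 hh0) _.
  by rewrite -natrM ler_nat.
have hYr : (#|nbhd e cc|)%:R <= c * (D + 1).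
  by rewrite /c /D natr1 -natrM ler_nat.
have hnr : n = (#|nbhd e cc|)%:R + (#|~: nbhd e cc|)%:R by rewrite /n -hcard natrD.
have hEr : ie * (#|~: nbhd e cc|)%:R <= c * (D * (D - 1)).
  apply: le_trans hEc _; rewrite /c /D.
  have -> : (maxdeg e)%:R - 1 = ((maxdeg e).-1)%:R :> R by rewrite -subn1 natrB.
  by rewrite -!natrM ler_nat.
have hS3r : (#|~: nbhd e cc|)%:R <= 3 * (#|S|)%:R :> R by rewrite -(natrM R 3) ler_nat.
have D0 : 1 <= D by rewrite /D ler1n.
have c0 : 0 <= c by rewrite /c ler0n.
set y := (#|nbhd e cc|)%:R in hYr hnr.
set M := (#|~: nbhd e cc|)%:R in hnr hEr hS3r.
set s := (#|S|)%:R in ivS hS3r.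
rewrite -/c in ivS.
split.
- split.
  + apply: div_le => //; first by nra.
    rewrite hnr; nra.
  + have [->|ie_pos] := eqVneq ie 0; first by rewrite !mul0r.
    have ie_gt : 0 < ie by rewrite lt_def ie_pos ie0.
    have hden : 0 < D ^+ 2 - D + ie * (D + 1) by nra.
    rewrite ler_pdivrMr; last by nra.
    set w := ie * n / (D ^+ 2 - D + ie * (D + 1)).
    have hw : w * (D ^+ 2 - D + ie * (D + 1)) = ie * n by rewrite /w divfK // gt_eqF.
    have n0 : 0 <= n by rewrite /n ler0n.
    have w0 : 0 <= w by rewrite /w; apply: divr_ge0; [apply: mulr_ge0 | exact: ltW].
    rewrite -[X in X <= _]hw; apply: ler_wpM2l => //; nra.
- apply: div_le => //; first by nra.
  rewrite hnr; nra.
- apply: div_le => //; first by nra.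
  case: hS4 => [hSe|h4].
    have hsM : s = M by rewrite /s /M hSe.
    rewrite hnr; have : iv * (D + 1) <= 3 * D by case: (lerP D 2) => hD2; nra.
    nra.
  have : n < 4 * s by rewrite /n /s -(natrM R 4) ltr_nat.
  nra.
Qed.
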